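(* Let $\bar L>0$, $\mu\ge0$ with $\bar L\ge\mu$, $p\in(0,1]$, $\alpha,\tau,\beta\in(0,1]$ and $\Gamma_0\ge1$. Set $\theta_{\min}=\frac14\min\{1,\frac\alpha p,\frac\tau p,\frac\beta p\}$ and for $t\ge0$ let $\bar\theta_{t+1}$ be the largest root of $p\bar L\Gamma_t\theta^2+p(\bar L+\Gamma_t\mu)\theta-(\bar L+\Gamma_t\mu)=0$, $\theta_{t+1}=\min\{\bar\theta_{t+1},\theta_{\min}\}$, $\gamma_{t+1}=\frac{p\theta_{t+1}\Gamma_t}{1-p\theta_{t+1}}$, $\Gamma_{t+1}=\Gamma_t+\gamma_{t+1}$. Then: 1. $\theta_{t+1},\gamma_{t+1},\Gamma_{t+1}$ are well defined and $\theta_{t+1},\gamma_{t+1}\ge0$ for all $t\ge0$; 2. $\gamma_{t+1}=p\theta_{t+1}\Gamma_{t+1}$ for all $t\ge0$; 3. $\bar L\theta_{t+1}\gamma_{t+1}\le\bar L+\Gamma_t\mu$ for all $t\ge0$; 4. $\Gamma_t\ge\frac{\Gamma_0}{2}\exp\big(t\min\{\sqrt{\frac{p\mu}{4\bar L}},p\theta_{\min}\}\big)$ for all $t\ge0$; 5. with $\bar t=\max\{\lceil\frac{1}{p\theta_{\min}}\log\frac{1}{2\Gamma_0p\theta_{\min}^2}\rceil,0\}$, $\Gamma_t\ge\frac{\Gamma_0}{2}\exp(tp\theta_{\min})$ for $t<\bar t$ and $\Gamma_t\ge\frac{1}{4p\theta_{\min}^2}+\frac{p(t-\bar t)^2}{16}$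 for $t\ge\bar t$; 6. $(\theta_{t+1})_{t\ge0}$ is non-increasing.
   Context: These are the learning-rate sequences used by the distributed optimization method 2Direction (there $\alpha$ is the contraction parameter of the server compressor, $\tau$ a momentum, $p$ a probability, and $\beta=1/(\omega+1)$ with $\omega\ge0$). *)

(* Defs.v *)
From Stdlib Require Import Reals ZArith.
Open Scope R_scope.

(* ceiling of a real number: Int_part is the floor (Int_part x = up x - 1). *)
Definition Rceil (x : R) : Z := (- Int_part (- x))%Z.

Definition theta_min (p alpha tau beta : R) : R :=
  / 4 * Rmin 1 (Rmin (alpha / p) (Rmin (tau / p) (beta / p))).

Definition quadr (L mu p G th : R) : R :=
  p * L * G * th ^ 2 + p * (L + G * mu) * th - (L + G * mu).

Definition theta_bar (L mu p G : R) : R :=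
  (- (p * (L + G * mu))
   + sqrt ((p * (L + G * mu)) ^ 2 + 4 * (p * L * G) * (L + G * mu)))
  / (2 * (p * L * G)).

Definition theta_next (L mu p alpha tau beta G : R) : R :=
  Rmin (theta_bar L mu p G) (theta_min p alpha tau beta).

Definition gamma_next (L mu p alpha tau beta G : R) : R :=
  p * theta_next L mu p alpha tau beta G * G
  / (1 - p * theta_next L mu p alpha tau beta G).

Fixpoint Gam (L mu p alpha tau beta G0 : R) (t : nat) : R :=
  match t with
  | O => G0
  | S t' => Gam L mu p alpha tau beta G0 t'
            + gamma_next L mu p alpha tau beta (Gam L mu p alpha tau beta G0 t')
  end.

(* theta_{t+1} and gamma_{t+1} *)
Definition theta_s (L mu p alpha tau beta G0 : R) (t : nat) : R :=
  theta_next L mu p alpha tau beta (Gam L mu p alpha tau beta G0 t).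
Definition gamma_s (L mu p alpha tau beta G0 : R) (t : nat) : R :=
  gamma_next L mu p alpha tau beta (Gam L mu p alpha tau beta G0 t).

Definition t_bar (p alpha tau beta G0 : R) : Z :=
  let tm := theta_min p alpha tau beta in
  Z.max (Rceil (/ (p * tm) * ln (/ (2 * G0 * p * tm ^ 2)))) 0.

(* Main.v *)
Require Import Defs.
From Stdlib Require Import Reals ZArith Lra Psatz.
Open Scope R_scope.

Lemma tbar_props L mu p G : 0 < L -> 0 <= mu -> 0 < p -> 0 < G ->
  quadr L mu p G (theta_bar L mu p G) = 0 /\ 0 < theta_bar L mu p G /\
  (forall x, quadr L mu p G x = (x - theta_bar L mu p G) *
      (p * L * G * (x + theta_bar L mu p G) + p * (L + G * mu))).
Proof.
  intros hL hmu hp hG.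
  assert (ha : 0 < p * L * G) by (apply Rmult_lt_0_compat; nra).
  assert (hA : 0 < L + G * mu) by nra.
  assert (hb : 0 < p * (L + G * mu)) by nra.
  set (a := p * L * G) in *. set (A := L + G * mu) in *. set (b := p * A) in *.
  set (D := b ^ 2 + 4 * a * A).
  assert (hD : 0 <= D) by (unfold D; nra).
  set (S := sqrt D).
  assert (hS2 : S * S = D) by (apply sqrt_sqrt; exact hD).
  assert (hS0 : 0 <= S) by apply sqrt_pos.
  assert (hSb : b < S) by (unfold D in hS2; nra).
  assert (Hth : 2 * a * theta_bar L mu p G = - b + S).
  { unfold theta_bar; fold a; fold A; fold b; fold D; fold S. field. lra. }
  set (th := theta_bar L mu p G) in *.
  assert (Hq : quadr L mu p G th = 0).
  { apply (Rmult_eq_reg_l (4 * a)); [| lra].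
    replace (4 * a * quadr L mu p G th) with
      ((2 * a * th) ^ 2 + 2 * b * (2 * a * th) - 4 * a * A)
      by (unfold quadr; fold a; fold A; fold b; ring).
    rewrite Hth. unfold D in hS2. nra. }
  assert (Hpos : 0 < th) by (apply (Rmult_lt_reg_l (2 * a)); lra).
  split; [exact Hq | split; [exact Hpos |]].
  intros x.
  replace (quadr L mu p G x) with (quadr L mu p G x - quadr L mu p G th) by lra.
  unfold quadr; fold a; fold A; fold b. ring.
Qed.

Definition hyps (L mu p alpha tau beta : R) : Prop :=
  0 < L /\ 0 <= mu /\ mu <= L /\ 0 < p /\ p <= 1 /\ 0 < alpha /\ alpha <= 1 /\
  0 < tau /\ tau <= 1 /\ 0 < beta /\ beta <= 1.

Lemma tm_props p alpha tau beta : 0 < p -> 0 < alpha -> 0 < tau -> 0 < beta ->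
  0 < theta_min p alpha tau beta /\ theta_min p alpha tau beta <= /4.
Proof.
  intros hp ha ht hb. unfold theta_min.
  assert (0 < alpha / p) by (apply Rdiv_lt_0_compat; lra).
  assert (0 < tau / p) by (apply Rdiv_lt_0_compat; lra).
  assert (0 < beta / p) by (apply Rdiv_lt_0_compat; lra).
  assert (0 < Rmin 1 (Rmin (alpha / p) (Rmin (tau / p) (beta / p)))).
  { repeat apply Rmin_glb_lt; lra. }
  pose proof (Rmin_l 1 (Rmin (alpha / p) (Rmin (tau / p) (beta / p)))).
  split; nra.
Qed.

Lemma step_basic L mu p alpha tau beta G : hyps L mu p alpha tau beta -> 1 <= G ->
  let tm := theta_min p alpha tau beta in
  let th := theta_next L mu p alpha tau beta G in
  0 < tm /\ tm <= /4 /\ 0 < th /\ th <= tm /\ th <= theta_bar L mu p G /\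
  (th = tm \/ th = theta_bar L mu p G) /\ p * th <= /4 /\
  gamma_next L mu p alpha tau beta G = p * th * G / (1 - p * th).
Proof.
  intros [hL [hmu [hLmu [hp [hp1 [ha [ha1 [ht [ht1 [hb hb1]]]]]]]]]] hG tm th.
  destruct (tm_props p alpha tau beta hp ha ht hb) as [htm htm1].
  destruct (tbar_props L mu p G hL hmu hp ltac:(lra)) as [_ [hbar _]].
  fold tm in htm, htm1.
  assert (E : th = tm \/ th = theta_bar L mu p G).
  { unfold th, theta_next. fold tm. apply Rmin_case; auto. }
  assert (th <= tm) by (unfold th, theta_next; apply Rmin_r).
  assert (th <= theta_bar L mu p G) by (unfold th, theta_next; apply Rmin_l).
  assert (0 < th) by (destruct E as [E|E]; rewrite E; lra).
  repeat split; auto; try lra.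
  nra.
Qed.

Lemma Rmult_le_0_r_compat_aux a b : a <= 0 -> 0 <= b -> a * b <= 0.
Proof. intros; nra. Qed.

Lemma step_main L mu p alpha tau beta G : hyps L mu p alpha tau beta -> 1 <= G ->
  let tm := theta_min p alpha tau beta in
  let th := theta_next L mu p alpha tau beta G in
  let ga := gamma_next L mu p alpha tau beta G in
  1 - p * th <> 0 /\ 0 <= th /\ 0 <= ga /\ ga = p * th * (G + ga) /\
  L * th * ga <= L + G * mu /\
  G + ga >= G * exp (Rmin (sqrt (p * mu / (4 * L))) (p * tm)) /\
  (p * G * tm ^ 2 <= 3/4 -> G + ga >= G * exp (p * tm)) /\
  (forall s, 0 <= s -> G >= / (4 * p * tm ^ 2) + p * s ^ 2 / 16 ->
      G + ga >= / (4 * p * tm ^ 2) + p * (s + 1) ^ 2 / 16).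
Proof.
  intros Hh hG tm th ga.
  destruct (step_basic L mu p alpha tau beta G Hh hG) as
    [htm [htm1 [hth [hthtm [hthb [E [hpth Hga]]]]]]].
  fold tm th in htm, htm1, hth, hthtm, hthb, E, hpth, Hga. fold ga in Hga.
  destruct Hh as [hL [hmu [hLmu [hp [hp1 _]]]]].
  destruct (tbar_props L mu p G hL hmu hp ltac:(lra)) as [hq [hbar hfac]].
  set (x := p * th) in *.
  assert (hx0 : 0 < x) by (unfold x; nra).
  assert (Hga2 : ga * (1 - x) = x * G) by (rewrite Hga; field; lra).
  assert (hga0 : 0 <= ga) by (rewrite Hga; unfold Rdiv; apply Rmult_le_pos; [nra | left; apply Rinv_0_lt_compat; lra]).
  assert (Hrec : ga = x * (G + ga)) by nra.
  assert (hqth : quadr L mu p G th <= 0).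
  { rewrite hfac.
    assert (0 < p * L * G) by (apply Rmult_lt_0_compat; nra).
    assert (0 < p * L * G * (th + theta_bar L mu p G)) by (apply Rmult_lt_0_compat; lra).
    assert (0 < p * (L + G * mu)) by (apply Rmult_lt_0_compat; nra).
    assert (th - theta_bar L mu p G <= 0) by lra.
    apply Rmult_le_0_r_compat_aux; lra. }
  assert (Hexp : forall y, 0 <= y -> y <= x -> G + ga >= G * exp y).
  { intros y hy hyx.
    pose proof (exp_ineq1_le (- x)) as H1. rewrite exp_Ropp in H1.
    pose proof (exp_pos x) as H2.
    assert (H3 : exp x * (1 - x) <= 1).
    { apply (Rmult_le_reg_r (/ exp x)); [apply Rinv_0_lt_compat; lra|].
      replace (exp x * (1 - x) * / exp x) with (1 - x) by (field; lra). lra. }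
    assert (exp y <= exp x).
    { destruct (Req_dec y x) as [->|]; [lra|]. left; apply exp_increasing; lra. }
    assert (G * exp x <= G + ga).
    { assert (Gd : G + ga = G / (1 - x)) by (apply (Rmult_eq_reg_r (1 - x)); [| lra]; field_simplify; lra).
      rewrite Gd. apply (Rmult_le_reg_r (1 - x)); [lra|].
      replace (G / (1 - x) * (1 - x)) with G by (field; lra). nra. }
    nra. }
  split; [lra|]. split; [lra|]. split; [lra|]. split; [exact Hrec|].
  split.
  {
    unfold quadr in hqth.
    assert (L * th * ga * (1 - x) <= (L + G * mu) * (1 - x)).
    { replace (L * th * ga * (1 - x)) with (L * th * (x * G)) by (rewrite <- Hga2; ring).
      unfold x. nra. }
    nra. }
  split.
  { apply Hexp.
    - apply Rmin_glb; [apply sqrt_pos | nra].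
    - destruct E as [E|E].
      + apply (Rle_trans _ (p * tm)); [apply Rmin_r | unfold x; rewrite E; lra].
      + apply (Rle_trans _ (sqrt (p * mu / (4 * L)))); [apply Rmin_l|].
        rewrite <- (sqrt_Rsqr x) by lra. apply sqrt_le_1_alt. unfold Rsqr.
        assert (hq' : p * L * G * th ^ 2 = (L + G * mu) * (1 - x)).
        { rewrite <- E in hq. unfold quadr in hq. unfold x. lra. }
        apply (Rmult_le_reg_r (4 * L)); [lra|].
        replace (p * mu / (4 * L) * (4 * L)) with (p * mu) by (field; lra).
        assert (L * (x * x) >= p * mu * (1 - x)).
        { unfold x. assert (G * (L * p * th * th) >= G * (mu * (1 - x))) by (unfold x in *; nra).
          unfold x in *. nra. }
        destruct (Rle_dec x (3/4)).
        * assert (0 <= p * mu) by nra.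
          assert (0 <= p * mu * (3/4 - x)) by (apply Rmult_le_pos; lra). nra.
        * assert (x * x >= 9/16) by nra. nra. }
  split.
  { intro hsm. apply Hexp; [nra|].
    destruct E as [E|E]; [unfold x; rewrite E; lra|].
    assert (hq2 : quadr L mu p G tm <= 0).
    { unfold quadr. assert (p * tm <= /4) by nra.
      assert (p * L * G * tm ^ 2 <= L * (3/4)).
      { assert (0 <= L * (3/4 - p * G * tm ^ 2)) by (apply Rmult_le_pos; lra). nra. }
      assert (0 <= G * mu * (3/4 - p * tm)) by (apply Rmult_le_pos; [apply Rmult_le_pos|]; lra).
      nra. }
    rewrite hfac in hq2.
    assert (0 < p * L * G) by (apply Rmult_lt_0_compat; nra).
    assert (tm <= theta_bar L mu p G).
    { destruct (Rle_dec tm (theta_bar L mu p G)) as [|Hn]; [assumption|].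
      exfalso.
      assert (0 < p * L * G * (tm + theta_bar L mu p G)) by (apply Rmult_lt_0_compat; lra).
      assert (0 < p * (L + G * mu)) by (apply Rmult_lt_0_compat; nra).
      assert (0 < (tm - theta_bar L mu p G) * (p * L * G * (tm + theta_bar L mu p G) + p * (L + G * mu))) by (apply Rmult_lt_0_compat; lra).
      lra. }
    assert (th = tm) by lra. unfold x. rewrite H1. lra. }
  intros s hs hG2.
  set (a := / (4 * p * tm ^ 2)) in *.
  assert (ha : a * (4 * p * tm ^ 2) = 1) by (unfold a; field; repeat split; try lra; apply pow_nonzero; lra).
  assert (ha0 : 0 < a) by (unfold a; apply Rinv_0_lt_compat; assert (0 < tm ^ 2) by (apply pow_lt; lra); nra).
  set (K := p * (2 * s + 1) / 16).
  assert (hK : 0 <= K) by (unfold K; nra).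
  assert (Hsq : (x * G) ^ 2 >= K ^ 2 -> x * G >= K).
  { intro H. destruct (Rge_dec (x * G) K) as [|Hn]; [assumption|].
    exfalso. assert (0 <= x * G) by nra. nra. }
  assert (HxG : x * G >= K).
  { apply Hsq. unfold K.
    destruct E as [E|E].
    - unfold x; rewrite E.
      set (b := p * s ^ 2 / 16) in *.
      assert (hb0 : 0 <= b) by (unfold b; nra).
      assert (HGG : (a + b) * (a + b) <= G * G) by (apply Rmult_le_compat; lra).
      assert (hpt : 0 <= (p * tm) ^ 2) by nra.
      assert (H2 : (p * tm) ^ 2 * ((a + b) * (a + b)) <= (p * tm) ^ 2 * (G * G))
        by (apply Rmult_le_compat_l; lra).
      assert (E0 : (p * tm * G) ^ 2 = (p * tm) ^ 2 * (G * G)) by ring.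
      assert (htm2 : 0 < tm ^ 2) by (apply pow_lt; lra).
      assert (E1 : (p * tm) ^ 2 * (a * a) = / (16 * tm ^ 2)).
      { unfold a; field. repeat split; try lra; apply pow_nonzero; lra. }
      assert (E2 : (p * tm) ^ 2 * (2 * a * b) = p ^ 2 * s ^ 2 / 32).
      { unfold a, b; field. repeat split; try lra; apply pow_nonzero; lra. }
      assert (E3 : / (16 * tm ^ 2) >= 1).
      { rewrite <- Rinv_1. apply Rle_ge, Rinv_le_contravar; nra. }
      assert (0 <= (p * tm) ^ 2 * (b * b)) by (apply Rmult_le_pos; nra).
      assert (Ex : (p * tm) ^ 2 * ((a + b) * (a + b)) =
         (p * tm) ^ 2 * (a * a) + (p * tm) ^ 2 * (2 * a * b) + (p * tm) ^ 2 * (b * b)) by ring.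
      assert (p ^ 2 * (4 * s ^ 2 - 4 * s - 1) + 256 >= 0).
      { assert (4 * s ^ 2 - 4 * s - 1 >= -2) by (pose proof (pow2_ge_0 (2 * s - 1)); nra).
        assert (p ^ 2 <= 1) by nra. nra. }
      nra.
    - assert (hq' : p * L * G * th ^ 2 = (L + G * mu) * (1 - x)).
      { rewrite <- E in hq. unfold quadr in hq. unfold x. lra. }
      assert (hx1 : x <= /4) by lra.
      assert (Hk : p * G * th ^ 2 >= 3 / 4).
      { assert (L * (p * G * th ^ 2) >= L * (3/4)) by (assert (0 <= G * mu * (1 - x)) by (apply Rmult_le_pos; [apply Rmult_le_pos|]; lra); assert (0 <= L * (3/4 - x)) by (apply Rmult_le_pos; lra); nra). apply Rle_ge; apply (Rmult_le_reg_l L); lra. }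
      assert (p * G >= 4 + p ^ 2 * s ^ 2 / 16).
      { assert (p * a >= 4).
        { assert (Hq1 : p * a * (4 * tm ^ 2) = 1) by (rewrite <- ha; ring).
          assert (h4 : 0 < 4 * tm ^ 2 <= /4) by (split; nra).
          destruct (Rge_dec (p * a) 4) as [|Hn]; [assumption|].
          exfalso. assert (p * a * (4 * tm ^ 2) < 4 * (4 * tm ^ 2)).
          { apply Rmult_lt_compat_r; lra. }
          lra. }
        assert (0 <= p * (G - (a + p * s ^ 2 / 16))) by (apply Rmult_le_pos; lra).
        assert (p * (G - (a + p * s ^ 2 / 16)) = p * G - p * a - p ^ 2 * s ^ 2 / 16) by field.
        lra. }
      assert ((x * G) ^ 2 = p * G * (p * G * th ^ 2)) by (unfold x; ring).
      assert (p * G * (p * G * th ^ 2) >= p * G * (3/4)).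
      { apply Rle_ge, Rmult_le_compat_l; [apply Rmult_le_pos|]; lra. }
      assert ((p * (2 * s + 1) / 16) ^ 2 = p ^ 2 * (4 * s ^ 2 + 4 * s + 1) / 256) by field.
      assert (p ^ 2 <= 1) by nra.
      assert (p ^ 2 * (4 * s ^ 2 + 4 * s + 1) <= 768 + 12 * p ^ 2 * s ^ 2).
      { assert (0 <= p ^ 2) by nra.
        assert (p ^ 2 * (8 * s ^ 2 - 4 * s - 1) >= - 2) .
        { assert (8 * s ^ 2 - 4 * s - 1 >= -2) by (pose proof (pow2_ge_0 (2 * s - 1)); nra). nra. }
        nra. }
      nra. }
  assert (ga >= x * G) by nra.
  unfold K in HxG. nra.
Qed.

Lemma Rmult_le_0_r_compat_aux' a b : 0 <= a -> b <= 0 -> a * b <= 0.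
Proof. intros; nra. Qed.

Lemma tbar_anti L mu p G G' : 0 < L -> 0 <= mu -> 0 < p -> 1 <= G -> G <= G' ->
  theta_bar L mu p G' <= theta_bar L mu p G.
Proof.
  intros hL hmu hp hG hGG.
  destruct (tbar_props L mu p G hL hmu hp ltac:(lra)) as [_ [hb hf]].
  destruct (tbar_props L mu p G' hL hmu hp ltac:(lra)) as [hq' [hb' _]].
  set (x := theta_bar L mu p G') in *.
  assert (Id : quadr L mu p G x * (L + G' * mu) =
     quadr L mu p G' x * (L + G * mu) + p * L ^ 2 * x ^ 2 * (G - G'))
    by (unfold quadr; ring).
  rewrite hq' in Id.
  assert (0 <= p * L ^ 2 * x ^ 2) by (assert (0 < L ^ 2) by (apply pow_lt; lra);
     assert (0 < x ^ 2) by (apply pow_lt; lra); assert (0 < p * L ^ 2) by (apply Rmult_lt_0_compat; lra); nra).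
  assert (Hq : quadr L mu p G x <= 0).
  { destruct (Rle_dec (quadr L mu p G x) 0) as [|Hn]; [assumption|].
    exfalso. assert (0 < quadr L mu p G x * (L + G' * mu)) by (apply Rmult_lt_0_compat; nra).
    assert (p * L ^ 2 * x ^ 2 * (G - G') <= 0) by (apply Rmult_le_0_r_compat_aux'; lra). lra. }
  rewrite hf in Hq.
  destruct (Rle_dec x (theta_bar L mu p G)) as [|Hn]; [assumption|]. exfalso.
  assert (0 < p * L * G * (x + theta_bar L mu p G)) by (apply Rmult_lt_0_compat; [apply Rmult_lt_0_compat; nra|lra]).
  assert (0 < p * (L + G * mu)) by (apply Rmult_lt_0_compat; nra).
  assert (0 < (x - theta_bar L mu p G) * (p * L * G * (x + theta_bar L mu p G) + p * (L + G * mu))) by (apply Rmult_lt_0_compat; lra).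
  lra.
Qed.

Lemma Rceil_spec x : x <= IZR (Rceil x) < x + 1.
Proof.
  unfold Rceil. destruct (base_Int_part (- x)) as [h1 h2].
  rewrite opp_IZR. lra.
Qed.

Theorem lemma3 (L mu p alpha tau beta G0 : R)
  (hL : 0 < L) (hmu : 0 <= mu) (hLmu : mu <= L)
  (hp0 : 0 < p) (hp1 : p <= 1)
  (ha0 : 0 < alpha) (ha1 : alpha <= 1)
  (ht0 : 0 < tau) (ht1 : tau <= 1)
  (hb0 : 0 < beta) (hb1 : beta <= 1)
  (hG0 : 1 <= G0) :
  let tm := theta_min p alpha tau beta in
  let Gm := Gam L mu p alpha tau beta G0 in
  let th := theta_s L mu p alpha tau beta G0 in
  let ga := gamma_s L mu p alpha tau beta G0 in
  let tb := t_bar p alpha tau beta G0 in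
  (* 1. well-definedness and nonnegativity *)
  (forall t : nat,
      quadr L mu p (Gm t) (theta_bar L mu p (Gm t)) = 0 /\
      (forall x, quadr L mu p (Gm t) x = 0 -> x <= theta_bar L mu p (Gm t)) /\
      1 - p * th t <> 0 /\
      0 <= th t /\ 0 <= ga t) /\
  (* 2. *)
  (forall t : nat, ga t = p * th t * Gm (S t)) /\
  (* 3. *)
  (forall t : nat, L * th t * ga t <= L + Gm t * mu) /\
  (* 4. *)
  (forall t : nat,
      Gm t >= G0 / 2 * exp (INR t * Rmin (sqrt (p * mu / (4 * L))) (p * tm))) /\
  (* 5. *)
  (forall t : nat,
      ((Z.of_nat t < tb)%Z -> Gm t >= G0 / 2 * exp (INR t * p * tm)) /\
      ((tb <= Z.of_nat t)%Z ->
         Gm t >= / (4 * p * tm ^ 2) + p * (INR t - IZR tb) ^ 2 / 16)) /\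
  (* 6. *)
  (forall t : nat, th (S t) <= th t).
Proof.
  intros tm Gm th ga tb.
  assert (Hh : hyps L mu p alpha tau beta) by (repeat split; assumption).
  destruct (tm_props p alpha tau beta hp0 ha0 ht0 hb0) as [htm htm1].
  fold tm in htm, htm1.
  assert (GS : forall t, Gm (S t) = Gm t + ga t) by reflexivity.
  assert (Gpos : forall t, 1 <= Gm t).
  { induction t as [|t IH]; [exact hG0|].
    rewrite GS. destruct (step_main L mu p alpha tau beta (Gm t) Hh IH) as [_ [_ [h _]]].
    unfold ga, gamma_s. fold Gm. lra. }
  assert (ST : forall t,
    1 - p * th t <> 0 /\ 0 <= th t /\ 0 <= ga t /\ ga t = p * th t * (Gm t + ga t) /\
    L * th t * ga t <= L + Gm t * mu /\
    Gm t + ga t >= Gm t * exp (Rmin (sqrt (p * mu / (4 * L))) (p * tm)) /\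
    (p * Gm t * tm ^ 2 <= 3/4 -> Gm t + ga t >= Gm t * exp (p * tm)) /\
    (forall s, 0 <= s -> Gm t >= / (4 * p * tm ^ 2) + p * s ^ 2 / 16 ->
      Gm t + ga t >= / (4 * p * tm ^ 2) + p * (s + 1) ^ 2 / 16)).
  { intro t. exact (step_main L mu p alpha tau beta (Gm t) Hh (Gpos t)). }
  assert (Gmono : forall t, Gm t <= Gm (S t)).
  { intro t. rewrite GS. destruct (ST t) as [_ [_ [h _]]]. lra. }
  split.
  { intro t. destruct (tbar_props L mu p (Gm t) hL hmu hp0 ltac:(pose proof (Gpos t); lra))
      as [hq [hb hf]].
    destruct (ST t) as [h1 [h2 [h3 _]]].
    split; [exact hq|]. split; [|tauto].
    intros x hx. rewrite hf in hx.
    destruct (Rle_dec 0 x).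
    - destruct (Rmult_integral _ _ hx) as [E|E]; [lra|].
      exfalso. pose proof (Gpos t).
      assert (0 < p * L * Gm t * (x + theta_bar L mu p (Gm t))) by (apply Rmult_lt_0_compat; [apply Rmult_lt_0_compat; nra|lra]).
      assert (0 < p * (L + Gm t * mu)) by (apply Rmult_lt_0_compat; nra).
      lra.
    - lra. }
  split.
  { intro t. rewrite GS. destruct (ST t) as [_ [_ [_ [h _]]]]. exact h. }
  split.
  { intro t. destruct (ST t) as [_ [_ [_ [_ [h _]]]]]. exact h. }
  split.
  { set (m := Rmin (sqrt (p * mu / (4 * L))) (p * tm)).
    assert (H : forall t, Gm t >= G0 * exp (INR t * m)).
    { induction t as [|t IH].
      - replace (INR 0 * m) with 0 by (simpl; ring). rewrite exp_0. change (Gm 0%nat) with G0. lra.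
      - rewrite S_INR, Rmult_plus_distr_r, Rmult_1_l, exp_plus, GS.
        destruct (ST t) as [_ [_ [_ [_ [_ [h _]]]]]]. fold m in h.
        pose proof (exp_pos m).
        assert (Gm t * exp m >= G0 * exp (INR t * m) * exp m) by (apply Rle_ge, Rmult_le_compat_r; lra).
        lra. }
    intro t. specialize (H t). pose proof (exp_pos (INR t * m)).
    assert (0 < G0 * exp (INR t * m)) by (apply Rmult_lt_0_compat; lra).
    replace (G0 / 2 * exp (INR t * m)) with (G0 * exp (INR t * m) / 2) by field. lra. }
  set (a := / (4 * p * tm ^ 2)).
  assert (ha : a * (4 * p * tm ^ 2) = 1).
  { unfold a. field. repeat split; try lra; try (apply pow_nonzero; lra). }
  assert (hapos : 0 < a).
  { unfold a. apply Rinv_0_lt_compat. assert (0 < tm ^ 2) by (apply pow_lt; lra). nra. }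
  assert (P : forall t, Gm t >= G0 * exp (INR t * p * tm) \/ Gm t >= 3 * a).
  { induction t as [|t IH].
    - left. replace (INR 0 * p * tm) with 0 by (simpl; ring). rewrite exp_0. change (Gm 0%nat) with G0. lra.
    - destruct (Rle_dec (Gm t) (3 * a)) as [Hle|Hgt].
      + destruct IH as [IH|IH].
        * left. rewrite S_INR.
          replace ((INR t + 1) * p * tm) with (INR t * p * tm + p * tm) by ring.
          rewrite exp_plus, GS.
          destruct (ST t) as [_ [_ [_ [_ [_ [_ [h _]]]]]]].
          assert (p * Gm t * tm ^ 2 <= 3 / 4).
          { assert (p * Gm t * tm ^ 2 = Gm t * (p * tm ^ 2)) by ring.
            assert (p * (3 * a) * tm ^ 2 = 3/4) by (replace (p * (3 * a) * tm ^ 2) with (3 / 4 * (a * (4 * p * tm ^ 2))) by field; rewrite ha; field).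
            assert (0 < p * tm ^ 2) by (assert (0 < tm ^ 2) by (apply pow_lt; lra); nra).
            nra. }
          specialize (h H). pose proof (exp_pos (p * tm)).
          assert (Gm t * exp (p * tm) >= G0 * exp (INR t * p * tm) * exp (p * tm)) by (apply Rle_ge, Rmult_le_compat_r; lra).
          lra.
        * right. pose proof (Gmono t). lra.
      + right. pose proof (Gmono t). lra. }
  set (X := / (p * tm) * ln (/ (2 * G0 * p * tm ^ 2))).
  assert (hptm : 0 < p * tm) by nra.
  assert (hY : 0 < / (2 * G0 * p * tm ^ 2)).
  { apply Rinv_0_lt_compat. assert (0 < tm ^ 2) by (apply pow_lt; lra).
    assert (0 < 2 * G0 * p) by nra. nra. }
  assert (EY : G0 * / (2 * G0 * p * tm ^ 2) = 2 * a).
  { unfold a. field. repeat split; try lra; try (apply pow_nonzero; lra). }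
  assert (tbE : tb = Z.max (Rceil X) 0) by reflexivity.
  pose proof (Rceil_spec X) as [hc1 hc2].
  split.
  { intro t. split.
    - intro Ht.
      assert (HtX : INR t < X).
      { assert (Z.of_nat t < Rceil X)%Z by lia.
        assert (Z.of_nat t + 1 <= Rceil X)%Z by lia.
        apply IZR_le in H0. rewrite plus_IZR, <- INR_IZR_INZ in H0. lra. }
      assert (Hlt : exp (INR t * p * tm) < / (2 * G0 * p * tm ^ 2)).
      { rewrite <- (exp_ln _ hY). apply exp_increasing.
        unfold X in HtX.
        apply (Rmult_lt_compat_l (p * tm)) in HtX; [|lra].
        replace (p * tm * (/ (p * tm) * ln (/ (2 * G0 * p * tm ^ 2)))) with
          (ln (/ (2 * G0 * p * tm ^ 2))) in HtX by (field; lra).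
        lra. }
      assert (G0 * exp (INR t * p * tm) < 2 * a).
      { rewrite <- EY. apply Rmult_lt_compat_l; lra. }
      pose proof (exp_pos (INR t * p * tm)).
      assert (0 < G0 * exp (INR t * p * tm)) by (apply Rmult_lt_0_compat; lra).
      replace (G0 / 2 * exp (INR t * p * tm)) with (G0 * exp (INR t * p * tm) / 2) by field.
      destruct (P t); lra.
    - intro Ht.
      set (n := Z.to_nat tb).
      assert (Hn : Z.of_nat n = tb) by (unfold n; rewrite Z2Nat.id; lia).
      assert (HnX : X <= INR n).
      { rewrite INR_IZR_INZ, Hn, tbE.
        destruct (Z.max_spec (Rceil X) 0) as [[h1 h2]|[h1 h2]]; rewrite h2.
        - apply IZR_lt in h1. lra.
        - lra. }
      assert (Hbase : Gm n >= a).
      { destruct (P n) as [h|h]; [|lra].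
        assert (/ (2 * G0 * p * tm ^ 2) <= exp (INR n * p * tm)).
        { rewrite <- (exp_ln _ hY).
          destruct (Req_dec (ln (/ (2 * G0 * p * tm ^ 2))) (INR n * p * tm)) as [E|E].
          - rewrite E; lra.
          - left. apply exp_increasing.
            unfold X in HnX.
            apply (Rmult_le_compat_l (p * tm)) in HnX; [|lra].
            replace (p * tm * (/ (p * tm) * ln (/ (2 * G0 * p * tm ^ 2)))) with
              (ln (/ (2 * G0 * p * tm ^ 2))) in HnX by (field; lra).
            lra. }
        assert (G0 * / (2 * G0 * p * tm ^ 2) <= G0 * exp (INR n * p * tm)) by (apply Rmult_le_compat_l; lra).
        lra. }
      assert (Hind : forall k, Gm (n + k)%nat >= a + p * (INR k) ^ 2 / 16).
      { induction k as [|k IH].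
        - rewrite Nat.add_0_r. simpl. lra.
        - rewrite Nat.add_succ_r, GS, S_INR.
          destruct (ST (n + k)%nat) as [_ [_ [_ [_ [_ [_ [_ h]]]]]]].
          apply h; [apply pos_INR | exact IH]. }
      assert (Hk : (n <= t)%nat) by lia.
      destruct (Nat.le_exists_sub n t Hk) as [k [Ek _]].
      rewrite Ek.
      replace (INR (k + n) - IZR tb) with (INR k)
        by (rewrite plus_INR, <- Hn, <- INR_IZR_INZ; ring).
      rewrite (Nat.add_comm k n). apply Hind. }
  intro t. unfold th, theta_s, theta_next. fold Gm.
  assert (Rle_min : forall u v w, u <= v -> Rmin u w <= Rmin v w).
  { intros u v w huv. unfold Rmin. destruct (Rle_dec u w), (Rle_dec v w); lra. }
  apply Rle_min. apply tbar_anti; auto.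
Qed.
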